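(* Let $n\ge 1$, $k\ge 2$, $\mathcal{K}$ a set of size $k$, $\epsilon\ge 0$ and $p=e^\epsilon/(k-1+e^\epsilon)$. Then the cascades of the full $k$-RR channel $\mathbf{N}$ and the shuffle channel $\mathbf{S}$ in either order are equivalent: $\mathbf{N}\mathbf{S}\equiv\mathbf{S}\mathbf{N}$.
   Context: A dataset is $x=(x_0,\dots,x_{n-1})\in\mathcal{K}^n$; its histogram $h(x)$ is the map $\kappa\mapsto|\{i:x_i=\kappa\}|$, and for a histogram $z$, $\#z$ is the number of datasets with histogram $z$. A channel from finite $\mathcal{X}$ to finite $\mathcal{Y}$ is a row-stochastic matrix; the cascade $\mathbf{C}\mathbf{D}$ of channels $\mathbf{C}:\mathcal{X}\to\mathcal{Y}$, $\mathbf{D}:\mathcal{Y}\to\mathcal{Z}$ is the ordinary matrix product. The full $k$-RR channel $\mathbf{N}:\mathcal{K}^n\to\mathcal{K}^n$ has $\mathbf{N}_{x,y}=\prod_{i=0}^{n-1}q(y_i\mid x_i)$ where $q(b\mid a)=p$ if $b=a$ and $q(b\mid a)=(1-p)/(k-1)$ otherwise. The shuffle channel $\mathbf{S}:\mathcal{K}^n\to\mathcal{K}^n$ has $\mathbf{S}_{x,y}=1/\#h(x)$ if $h(y)=h(x)$ and $0$ otherwise. For a prior $\pi$ on $\mathcal{X}$ and gain function $g:\mathcal{W}\times\mathcal{X}\to[0,\infty)$ ($\mathcal{W}$ finite nonempty), the posterior vulnerability of $\mathbf{C}$ is $V_g[\pi\triangleright\mathbf{C}]=\sum_{y}\max_{w\in\mathcal{W}}\sum_{x}\pi_x\mathbf{C}_{x,y}g(w,x)$.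 Channels $\mathbf{C},\mathbf{C}'$ with the same input set are equivalent ($\mathbf{C}\equiv\mathbf{C}'$) iff $V_g[\pi\triangleright\mathbf{C}]=V_g[\pi\triangleright\mathbf{C}']$ for all priors $\pi$ and all such gain functions $g$. *)

(* Defs.v *)
From HB Require Import structures.
From mathcomp Require Import all_boot all_order all_algebra.
From mathcomp Require Import reals sequences exp.

Set Implicit Arguments.
Unset Strict Implicit.
Unset Printing Implicit Defensive.

Import Order.TTheory GRing.Theory Num.Theory.
Local Open Scope ring_scope.

Section Defs.
Variable R : realType.

Definition channel (X Y : finType) := X -> Y -> R.

Definition is_channel (X Y : finType) (C : channel X Y) : Prop :=
  (forall x y, 0 <= C x y) /\ (forall x, \sum_(y : Y) C x y = 1).

Definition cascade (X Y Z : finType) (C : channel X Y) (D : channel Y Z)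
  : channel X Z := fun x z => \sum_(y : Y) C x y * D y z.

Definition is_prior (X : finType) (pi : X -> R) : Prop :=
  (forall x, 0 <= pi x) /\ \sum_(x : X) pi x = 1.

(* posterior g-vulnerability; the max over the finite nonempty set W of
   nonnegative reals is written as a fold of Num.max starting at 0, which
   equals the true maximum since all summands are nonnegative. *)
Definition post_vuln (X Y W : finType) (g : W -> X -> R) (pi : X -> R)
  (C : channel X Y) : R :=
  \sum_(y : Y) \big[Num.max/0]_(w : W) \sum_(x : X) pi x * C x y * g w x.

Definition chan_equiv (X Y Y' : finType) (C : channel X Y) (C' : channel X Y')
  : Prop :=
  forall (pi : X -> R), is_prior pi ->
  forall (W : finType), (0 < #|W|)%N ->
  forall (g : W -> X -> R), (forall w x, 0 <= g w x) ->
    post_vuln g pi C = post_vuln g pi C'.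

Definition dataset (K : finType) (n : nat) := {ffun 'I_n -> K}.

Definition hist (K : finType) (n : nat) (x : dataset K n) : {ffun K -> nat} :=
  [ffun kappa => #|[set i | x i == kappa]|].

Definition num_hist (K : finType) (n : nat) (z : {ffun K -> nat}) : nat :=
  #|[set y : dataset K n | hist y == z]|.

Definition krr_q (K : finType) (k : nat) (p : R) (a b : K) : R :=
  if b == a then p else (1 - p) / (k - 1)%:R.

Definition fullKRR (K : finType) (n k : nat) (p : R)
  : channel (dataset K n) (dataset K n) :=
  fun x y => \prod_(i < n) krr_q k p (x i) (y i).

Definition shuffle (K : finType) (n : nat)
  : channel (dataset K n) (dataset K n) :=
  fun x y => if hist y == hist x then ((num_hist n (hist x))%:R)^-1 else 0.

End Defs.

(* Main.v *)
Require Import Defs.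
From HB Require Import structures.
From mathcomp Require Import all_boot all_order all_algebra all_fingroup.
From mathcomp Require Import reals sequences exp.
Import Order.TTheory GRing.Theory Num.Theory.
Local Open Scope ring_scope.

Lemma hist_count (K : finType) n (x : dataset K n) a :
  hist x a = count (pred1 a) [tuple x i | i < n].
Proof.
rewrite /hist ffunE /= -map_comp count_map.
rewrite cardsE cardE /enum_mem size_filter /=.
by apply: eq_count.
Qed.

Lemma hist_perm (K : finType) n (x y : dataset K n) :
  hist x = hist y -> exists s : {perm 'I_n}, forall i, x i = y (s i).
Proof.
move=> h.
have : perm_eq [tuple x i | i < n] [tuple y i | i < n].
  rewrite /perm_eq; apply/allP => a _ /=; apply/eqP.
  by rewrite -!hist_count h.
case/tuple_permP => s hs; exists s => i.
move/(congr1 (fun t => nth (x i) t i)): hs.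
by rewrite -!tnth_nth !tnth_mktuple.
Qed.

Section Main.
Variables (R : realType) (K : finType) (n k : nat) (p : R).
Local Notation N := (@fullKRR R K n k p).
Local Notation S := (@shuffle R K n).

Lemma N_sym x y : N x y = N y x.
Proof. by apply: eq_bigr => i _; rewrite /krr_q eq_sym. Qed.

Lemma hist_comp (y : dataset K n) (s : {perm 'I_n}) :
  hist [ffun i => y (s i)] = hist y.
Proof.
apply/ffunP => a; rewrite !ffunE.
rewrite -(card_preimset [set i | y i == a] (@perm_inj _ s)).
by apply: eq_card => i; rewrite !inE ffunE.
Qed.

Lemma L (x x' : dataset K n) c : hist x = hist x' ->
  \sum_(y | hist y == c) N x y = \sum_(y | hist y == c) N x' y.
Proof.
move=> /hist_perm [s hs].
pose h (y : dataset K n) : dataset K n := [ffun i => y (s i)].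
have hinj : injective h.
  move=> y1 y2 /ffunP e; apply/ffunP => j.
  by have := e ((s^-1)%g j); rewrite !ffunE permKV.
rewrite (reindex_inj hinj) /=.
apply: eq_big => y; first by rewrite /h hist_comp.
move=> _; rewrite /fullKRR [RHS](reindex_inj (@perm_inj _ s)) /=.
by apply: eq_bigr => i _; rewrite /h ffunE hs.
Qed.
Lemma num_hist_sum c (F : R) :
  \sum_(y : dataset K n | hist y == c) F = (num_hist n c)%:R * F.
Proof.
rewrite (eq_bigl (fun y => y \in [set y : dataset K n | hist y == c])); last by move=> y; rewrite inE.
by rewrite sumr_const mulr_natl.
Qed.

Lemma key x z : cascade N S x z = cascade S N x z.
Proof.
rewrite /cascade.
have E1 : \sum_y N x y * S y z =
   (num_hist n (hist z))%:R^-1 * \sum_(y | hist y == hist z) N x y.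
  rewrite mulr_sumr [RHS]big_mkcond; apply: eq_bigr => y _ /=; rewrite /shuffle.
  case: (eqVneq (hist y) (hist z)) => [e|ne].
    by rewrite e mulrC.
  by rewrite ?eq_sym ?(negbTE ne) ?mulr0 ?mul0r.
have E2 : \sum_y S x y * N y z =
   (num_hist n (hist x))%:R^-1 * \sum_(y | hist y == hist x) N y z.
  rewrite mulr_sumr [RHS]big_mkcond; apply: eq_bigr => y _ /=; rewrite /shuffle.
  case: (eqVneq (hist y) (hist x)) => [e|ne].
    by rewrite ?e ?eqxx.
  by rewrite ?(negbTE ne) ?mulr0 ?mul0r.
rewrite E1 E2.
set A := \sum_(y | hist y == hist z) N x y.
set B := \sum_(y | hist y == hist x) N y z.
have pos c (w : dataset K n) : hist w = c -> (num_hist n c)%:R != 0 :> R.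
  move=> hw; rewrite pnatr_eq0 -lt0n; apply/card_gt0P; exists w.
  by rewrite inE hw.
have nx0 := pos _ x erefl; have nz0 := pos _ z erefl.
have KEY : (num_hist n (hist x))%:R * A = (num_hist n (hist z))%:R * B.
  rewrite -num_hist_sum.
  rewrite (eq_bigr (fun x' => \sum_(y | hist y == hist z) N x' y)); last first.
    by move=> x' /eqP hx'; apply: L; rewrite hx'.
  rewrite exchange_big /= -num_hist_sum; apply: eq_bigr => y /eqP hy.
  rewrite (eq_bigr (fun x' => N y x')); last by move=> x' _; rewrite N_sym.
  rewrite (L _ _ _ hy); apply: eq_bigr => x' _; exact: N_sym.
rewrite -[A](mulKf nx0) KEY mulrCA mulKf //.
Qed.

End Main.

Theorem mainTheorem2 (R : realType) (K : finType) (n k : nat)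
  (hn : (1 <= n)%N) (hk : (2 <= k)%N) (hK : #|K| = k)
  (eps : R) (heps : 0 <= eps) (p : R)
  (hp : p = expR eps / ((k - 1)%:R + expR eps)) :
  chan_equiv (cascade (@fullKRR R K n k p) (@shuffle R K n))
             (cascade (@shuffle R K n) (@fullKRR R K n k p)).
Proof.
move=> pi _ W _ g _; rewrite /post_vuln.
apply: eq_bigr => y _; apply: eq_bigr => w _; apply: eq_bigr => x _.
by rewrite key.
Qed.
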